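(* Let $\Phi_1,\Phi_2$ be doubling Young functions such that $\int^\infty\frac{dt}{\Phi_i(t)}<\infty$ for $i=1,2$. Then there exists a doubling Young function $\Phi$ with the following properties: - $\Phi(t)\le\min\{\Phi_1(t),\Phi_2(t)\}$ for all $t$; - $\int^\infty\frac{dt}{\Phi(t)}<\infty$; - there exists $c>0$ such that $\Phi(t)\ge c\min\{\Phi_1(t),\Phi_2(t)\}$ for all sufficiently large $t$.
   Context: A Young function is a convex increasing function $\Phi:[0,\infty)\to[0,\infty)$ with $\Phi(0)=0$. It is doubling if there is $C<\infty$ with $\Phi(2t)\le C\Phi(t)$ for all sufficiently large $t$. *)

(* Defs.v *)
From Stdlib Require Import Reals.
From Coquelicot Require Import Coquelicot.
Open Scope R_scope.

(* A Young function: convex, (non-strictly) increasing map [0,oo) -> [0,oo)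
   with Phi 0 = 0.  Phi is given as a total function R -> R; only its values
   on [0,oo) matter. *)
Definition young (Phi : R -> R) : Prop :=
  Phi 0 = 0 /\
  (forall t, 0 <= t -> 0 <= Phi t) /\
  (forall s t, 0 <= s -> s <= t -> Phi s <= Phi t) /\
  (forall s t l, 0 <= s -> 0 <= t -> 0 <= l <= 1 ->
     Phi (l * s + (1 - l) * t) <= l * Phi s + (1 - l) * Phi t).

Definition doubling (Phi : R -> R) : Prop :=
  exists C T : R, forall t, T <= t -> Phi (2 * t) <= C * Phi t.

Definition integrable_at_infty_inv (Phi : R -> R) : Prop :=
  exists a : R, 0 <= a /\ (forall t, a <= t -> 0 < Phi t) /\
    ex_RInt_gen (fun t => / Phi t) (at_point a) (Rbar_locally p_infty).

(* Main.v *)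
Require Import Defs.
From Stdlib Require Import Reals Lra Psatz.
From Coquelicot Require Import Coquelicot.
Open Scope R_scope.

Lemma young_lip (P : R -> R) : young P -> forall B y z, 0 < B -> 0 <= y <= z -> z <= B ->
  P z - P y <= (z - y) * (P (2*B) / B).
Proof.
  intros [P0 [Pnn [Pm Pc]]] B y z HB Hy Hz.
  set (lam := (2*B - z)/(2*B - y)).
  assert (Hd : 0 < 2*B - y) by lra.
  assert (Hl0 : 0 <= lam) by (unfold lam; apply Rdiv_le_0_compat; lra).
  assert (Hl1 : lam <= 1) by (unfold lam; apply Rle_div_l; lra).
  assert (Hz' : z = lam * y + (1 - lam) * (2*B)) by (unfold lam; field; lra).
  assert (Hc := Pc y (2*B) lam ltac:(lra) ltac:(lra) ltac:(lra)).
  rewrite <- Hz' in Hc.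
  assert (H1l : 1 - lam = (z - y) / (2*B - y)) by (unfold lam; field; lra).
  assert (HPy := Pnn y ltac:(lra)).
  assert (HP2 := Pnn (2*B) ltac:(lra)).
  assert (Hq : (z - y) / (2*B - y) <= (z - y) / B).
  { unfold Rdiv. apply Rmult_le_compat_l; [lra|]. apply Rinv_le_contravar; lra. }
  assert (P z - P y <= (1 - lam) * P (2*B)) by nra.
  rewrite H1l in H.
  assert ((z - y) / (2*B - y) * P (2*B) <= (z - y) / B * P (2*B)) by (apply Rmult_le_compat_r; lra).
  replace ((z - y) * (P (2*B) / B)) with ((z - y) / B * P (2*B)) by (field; lra).
  lra.
Qed.

Lemma young_cont (P : R -> R) : young P -> forall x, 0 < x -> continuity_pt P x.
Proof.
  intros HY x Hx.
  assert (Hm := proj1 (proj2 (proj2 HY))).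
  assert (HL := young_lip P HY (2*x)).
  set (L := P (2*(2*x)) / (2*x)).
  assert (HL0 : 0 <= L).
  { unfold L. apply Rdiv_le_0_compat; [apply (proj1 (proj2 HY)); lra | lra]. }
  unfold continuity_pt, continue_in, limit1_in, limit_in; simpl; unfold R_dist.
  intros eps Heps.
  exists (Rmin x (eps / (L + 1))). split.
  { apply Rmin_pos; [lra|]. apply Rdiv_lt_0_compat; lra. }
  intros y [_ Hy].
  assert (Hy1 := Rlt_le_trans _ _ _ Hy (Rmin_l _ _)).
  assert (Hy2 := Rlt_le_trans _ _ _ Hy (Rmin_r _ _)).
  apply Rabs_def2 in Hy1. 
  assert (Habs : Rabs (y - x) * (L + 1) < eps).
  { apply Rlt_le_trans with (eps / (L+1) * (L+1)).
    apply Rmult_lt_compat_r; lra. right; field; lra. }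
  assert (Ha := Rabs_pos (y - x)).
  destruct (Rle_dec x y) as [Hxy|Hxy].
  - assert (A := HL x y ltac:(lra) ltac:(lra) ltac:(lra)).
    assert (B := Hm x y ltac:(lra) Hxy).
    rewrite Rabs_right by lra. rewrite Rabs_right in Habs by lra. fold L in A. nra.
  - assert (A := HL y x ltac:(lra) ltac:(lra) ltac:(lra)).
    assert (B := Hm y x ltac:(lra) ltac:(lra)).
    rewrite Rabs_left1 by lra. rewrite Rabs_left1 in Habs by lra. fold L in A. nra.
Qed.

Lemma young_inv_ex (P : R -> R) : young P -> forall u v, 0 < u -> u <= v ->
  (forall t, u <= t -> t <= v -> 0 < P t) -> ex_RInt (fun t => / P t) u v.
Proof.
  intros HY u v Hu Huv Hpos.
  apply ex_RInt_Reals_1. apply continuity_implies_RiemannInt; auto.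
  intros x Hx. apply (continuity_pt_inv P x).
  apply young_cont; auto; lra.
  apply Rgt_not_eq, Hpos; lra.
Qed.

Lemma bound_gen (g : R -> R) (a0 l : R) :
  (forall t, a0 <= t -> 0 <= g t) ->
  (forall u v, a0 <= u -> u <= v -> ex_RInt g u v) ->
  is_RInt_gen g (at_point a0) (Rbar_locally p_infty) l ->
  forall u b, a0 <= u -> u <= b -> RInt g u b <= l.
Proof.
  intros Hnn Hex Hg u b Hu Hub.
  destruct (Rle_dec (RInt g u b) l) as [H|H]; auto. exfalso.
  assert (Heps : 0 < RInt g u b - l) by lra.
  specialize (Hg (ball l (mkposreal _ Heps)) (locally_ball l (mkposreal _ Heps))).
  destruct Hg as [Q R HQ HR HQR].
  destruct HR as [M HM].
  set (y := Rmax M b + 1).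
  assert (Hy1 : M < y) by (unfold y; assert (Hm := Rmax_l M b); lra).
  assert (Hy2 : b < y) by (unfold y; assert (Hm := Rmax_r M b); lra).
  destruct (HQR a0 y HQ (HM y Hy1)) as [v [Hv Hb]].
  simpl in Hv, Hb.
  assert (Hv2 : RInt g a0 y = v) by (apply is_RInt_unique; exact Hv). rewrite <- Hv2 in Hb.
  unfold ball in Hb; simpl in Hb; unfold AbsRing_ball, abs, minus, plus, opp in Hb; simpl in Hb.
  apply Rabs_def2 in Hb.
  assert (E1 := RInt_Chasles g a0 u y (Hex a0 u ltac:(lra) ltac:(lra)) (Hex u y ltac:(lra) ltac:(lra))).
  assert (E2 := RInt_Chasles g u b y (Hex u b ltac:(lra) ltac:(lra)) (Hex b y ltac:(lra) ltac:(lra))).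
  assert (P1 := RInt_ge_0 g a0 u ltac:(lra) (Hex a0 u ltac:(lra) ltac:(lra)) (fun x Hx => Hnn x ltac:(lra))).
  assert (P2 := RInt_ge_0 g b y ltac:(lra) (Hex b y ltac:(lra) ltac:(lra)) (fun x Hx => Hnn x ltac:(lra))).
  change plus with Rplus in E1, E2. lra.
Qed.

Lemma gen_of_bounded (f : R -> R) (a M : R) :
  (forall t, a <= t -> 0 <= f t) ->
  (forall b, a <= b -> ex_RInt f a b) ->
  (forall b, a <= b -> RInt f a b <= M) ->
  ex_RInt_gen f (at_point a) (Rbar_locally p_infty).
Proof.
  intros Hnn Hex HM.
  set (E := fun y => exists b, a <= b /\ y = RInt f a b).
  assert (Hb : bound E) by (exists M; intros y [b [Hb ->]]; auto).
  assert (Hne : exists x, E x) by (exists (RInt f a a); exists a; split; [lra|auto]).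
  destruct (completeness E Hb Hne) as [L [HL1 HL2]].
  assert (Hmono : forall b c, a <= b -> b <= c -> RInt f a b <= RInt f a c).
  { intros b c H1 H2. rewrite <- (RInt_Chasles f a b c (Hex b H1)
      (ex_RInt_Chasles_2 f a b c ltac:(lra) (Hex c ltac:(lra)))).
    change plus with Rplus.
    assert (0 <= RInt f b c).
    { apply RInt_ge_0; auto. apply (ex_RInt_Chasles_2 f a b c); [lra| apply Hex; lra].
      intros x Hx; apply Hnn; lra. }
    lra. }
  exists L. intros P [eps Heps].
  assert (Hx : exists b0, a <= b0 /\ L - eps < RInt f a b0).
  { apply Classical_Pred_Type.not_all_not_ex. intros Hn.
    assert (L <= L - eps).
    { apply HL2. intros y [b [Hab ->]].
      destruct (Rle_dec (RInt f a b) (L - eps)); auto.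
      exfalso; apply (Hn b); split; auto; lra. }
    destruct eps; simpl in *; lra. }
  destruct Hx as [b0 [Hb0 Hlt]].
  apply (Filter_prod _ _ _ (fun x => x = a) (fun y => b0 < y)); [reflexivity| exists b0; auto|].
  intros x y -> Hy. simpl.
  exists (RInt f a y). split. apply (RInt_correct (V:=R_CompleteNormedModule)); apply Hex; lra.
  apply Heps. change (Rabs (RInt f a y - L) < eps).
  assert (HyE : RInt f a y <= L) by (apply HL1; exists y; split; [lra|auto]).
  assert (Hm := Hmono b0 y Hb0 ltac:(lra)).
  rewrite Rabs_left1 by lra. lra.
Qed.
Section S.
Variables P1 P2 : R -> R.
Hypothesis Y1 : young P1.
Hypothesis Y2 : young P2.

Definition Ec (t : R) : R -> Prop := fun y => exists s, 0 <= s <= t /\ y = P1 s + P2 (t - s).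
Definition Phi (t : R) : R := real (Glb_Rbar (Ec t)).

Lemma Ec_nn t y : Ec t y -> 0 <= y.
Proof.
  intros [s [Hs ->]]. destruct Y1 as [_ [N1 _]]. destruct Y2 as [_ [N2 _]].
  assert (A := N1 s ltac:(lra)). assert (B := N2 (t - s) ltac:(lra)). lra.
Qed.

Lemma glb_props t y0 : Ec t y0 ->
  0 <= Phi t /\ (forall y, Ec t y -> Phi t <= y) /\ (forall m, (forall y, Ec t y -> m <= y) -> m <= Phi t).
Proof.
  intros H0. unfold Phi. destruct (Glb_Rbar_correct (Ec t)) as [lb gl].
  destruct (Glb_Rbar (Ec t)) as [r| |] eqn:E.
  - simpl. assert (Z := gl (Finite 0) (fun x Hx => Ec_nn t x Hx)). simpl in Z.
    split; auto. split. intros y Hy. exact (lb y Hy).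
    intros m Hm. exact (gl (Finite m) Hm).
  - exfalso. exact (lb y0 H0).
  - exfalso. exact (gl (Finite 0) (fun x Hx => Ec_nn t x Hx)).
Qed.

Lemma Ec_wit t s : 0 <= s <= t -> Ec t (P1 s + P2 (t - s)).
Proof. intros H. exists s; auto. Qed.

Lemma Phi_le t s : 0 <= s <= t -> Phi t <= P1 s + P2 (t - s).
Proof. intros H. apply (glb_props t _ (Ec_wit t s H)). apply Ec_wit; auto. Qed.

Lemma Phi_ge t m : 0 <= t -> (forall s, 0 <= s <= t -> m <= P1 s + P2 (t - s)) -> m <= Phi t.
Proof.
  intros Ht H. apply (glb_props t _ (Ec_wit t t ltac:(lra))).
  intros y [s [Hs ->]]. auto.
Qed.

Lemma Phi_nn t : 0 <= t -> 0 <= Phi t.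
Proof. intros Ht. apply (proj1 (glb_props t _ (Ec_wit t t ltac:(lra)))). Qed.

Lemma Phi_young : young Phi.
Proof.
  destruct Y1 as [Z1 [N1 [M1 C1]]]. destruct Y2 as [Z2 [N2 [M2 C2]]].
  split; [|split; [|split]].
  - apply Rle_antisym. assert (H := Phi_le 0 0 ltac:(lra)).
    replace (0 - 0) with 0 in H by ring. lra. apply Phi_nn; lra.
  - apply Phi_nn.
  - intros s t Hs Hst. apply Phi_ge; [lra|]. intros x Hx.
    destruct (Rle_dec x s).
    + assert (H := Phi_le s x ltac:(lra)). pose proof (M2 (s - x) (t - x) ltac:(lra) ltac:(lra)). lra.
    + assert (H := Phi_le s s ltac:(lra)). replace (s - s) with 0 in H by ring.
      pose proof (M1 s x ltac:(lra) ltac:(lra)). pose proof (N2 (t - x) ltac:(lra)). lra.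
  - intros s t l Hs Ht Hl.
    destruct (Req_dec l 0) as [->|Hl0].
    { replace (0 * s + (1 - 0) * t) with t by ring. pose proof (Phi_nn s Hs). lra. }
    destruct (Req_dec l 1) as [->|Hl1].
    { replace (1 * s + (1 - 1) * t) with s by ring. pose proof (Phi_nn t Ht). lra. }
    set (u := l * s + (1 - l) * t).
    assert (Hu : 0 <= u) by (unfold u; nra).
    assert (Step1 : forall x y, 0 <= x <= s -> 0 <= y <= t ->
       Phi u <= l * (P1 x + P2 (s - x)) + (1 - l) * (P1 y + P2 (t - y))).
    { intros x y Hx Hy. set (z := l * x + (1 - l) * y).
      assert (Hz : 0 <= z <= u) by (unfold z, u; nra).
      assert (H := Phi_le u z Hz).
      assert (A := C1 x y l ltac:(lra) ltac:(lra) Hl). fold z in A.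
      assert (B := C2 (s - x) (t - y) l ltac:(lra) ltac:(lra) Hl).
      replace (l * (s - x) + (1 - l) * (t - y)) with (u - z) in B by (unfold u, z; ring).
      lra. }
    assert (Step2 : forall y, 0 <= y <= t -> Phi u <= l * Phi s + (1 - l) * (P1 y + P2 (t - y))).
    { intros y Hy. set (B := P1 y + P2 (t - y)).
      set (m := (Phi u - (1 - l) * B) / l).
      assert (Hm : m <= Phi s).
      { apply Phi_ge; auto. intros x Hx. unfold m. apply Rle_div_l; [lra|].
        pose proof (Step1 x y Hx Hy). fold B in H. lra. }
      assert (Hml : m * l = Phi u - (1 - l) * B) by (unfold m; field; lra).
      nra. }
    set (m := (Phi u - l * Phi s) / (1 - l)).
    assert (Hm : m <= Phi t).
    { apply Phi_ge; auto. intros y Hy. unfold m. apply Rle_div_l; [lra|].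
      pose proof (Step2 y Hy). lra. }
    assert (Hml : m * (1 - l) = Phi u - l * Phi s) by (unfold m; field; lra).
    nra.
Qed.

Lemma Phi_upper t : 0 <= t -> Phi t <= Rmin (P1 t) (P2 t).
Proof.
  intros Ht. destruct Y1 as [Z1 _]. destruct Y2 as [Z2 _]. apply Rmin_glb.
  - assert (H := Phi_le t t ltac:(lra)). replace (t - t) with 0 in H by ring. lra.
  - assert (H := Phi_le t 0 ltac:(lra)). replace (t - 0) with t in H by ring. lra.
Qed.

Lemma Phi_lower t : 0 <= t -> Rmin (P1 (t/2)) (P2 (t/2)) <= Phi t.
Proof.
  intros Ht. destruct Y1 as [Z1 [N1 [M1 C1]]]. destruct Y2 as [Z2 [N2 [M2 C2]]].
  apply Phi_ge; auto. intros s Hs.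
  destruct (Rle_dec (t/2) s).
  - pose proof (M1 (t/2) s ltac:(lra) ltac:(lra)). pose proof (N2 (t - s) ltac:(lra)).
    pose proof (Rmin_l (P1 (t/2)) (P2 (t/2))). lra.
  - pose proof (M2 (t/2) (t - s) ltac:(lra) ltac:(lra)). pose proof (N1 s ltac:(lra)).
    pose proof (Rmin_r (P1 (t/2)) (P2 (t/2))). lra.
Qed.

End S.

Lemma pos_a (P : R -> R) a : young P -> 0 <= a -> 0 < P a -> 0 < a.
Proof.
  intros [Z _] Ha Hp. destruct (Req_dec a 0) as [->|]; [rewrite Z in Hp; lra| lra].
Qed.

Lemma inv_bound (p q1 q2 K : R) : 0 < p -> 0 < q1 -> 0 < q2 -> Rmin q1 q2 <= K * p ->
  / p <= K * (/ q1 + / q2).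
Proof.
  intros Hp H1 H2 Hm.
  set (m := Rmin q1 q2).
  assert (Hm0 : 0 < m) by (unfold m; apply Rmin_pos; auto).
  assert (Hinv : / m <= / q1 + / q2).
  { unfold m, Rmin; destruct Rle_dec;
    pose proof (Rinv_0_lt_compat q1 H1); pose proof (Rinv_0_lt_compat q2 H2); lra. }
  assert (HK : 0 < K).
  { destruct (Rle_dec K 0) as [HK|HK]; [|lra]. assert (K * p <= 0).
    { rewrite <- (Rmult_0_l p). apply Rmult_le_compat_r; lra. } fold m in Hm. lra. }
  assert (/ p <= K * / m).
  { set (ip := / p). set (im := / m).
    assert (E1 : p * ip = 1) by (unfold ip; field; lra).
    assert (E2 : m * im = 1) by (unfold im; field; lra).
    assert (Pi : 0 < ip) by (apply Rinv_0_lt_compat; auto).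
    assert (Pm : 0 < im) by (apply Rinv_0_lt_compat; auto).
    fold m in Hm.
    assert (0 <= (K * p - m) * (ip * im)) by (apply Rmult_le_pos; [lra| apply Rmult_le_pos; lra]).
    replace ((K * p - m) * (ip * im)) with (K * im * (p * ip) - ip * (m * im)) in H by ring.
    rewrite E1, E2 in H. lra. }
  assert (K * / m <= K * (/ q1 + / q2)) by (apply Rmult_le_compat_l; lra).
  lra.
Qed.

Lemma rint_lin (f g : R -> R) a b K : ex_RInt f a b -> ex_RInt g a b ->
  RInt (fun x => K * (f x + g x)) a b = K * (RInt f a b + RInt g a b) /\ ex_RInt (fun x => K * (f x + g x)) a b.
Proof.
intros e1 e2.
assert (e12 : ex_RInt (fun x => f x + g x) a b) by exact (@ex_RInt_plus R_NormedModule f g a b e1 e2).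
split.
transitivity (scal K (RInt (fun x => f x + g x) a b)).
exact (@RInt_scal R_CompleteNormedModule (fun x => f x + g x) a b K e12).
transitivity (scal K (plus (RInt f a b) (RInt g a b))).
f_equal. exact (@RInt_plus R_CompleteNormedModule f g a b e1 e2). reflexivity.
exact (@ex_RInt_scal R_NormedModule (fun x => f x + g x) a b K e12).
Qed.

Lemma rmin_mono a b c d K : 0 <= K -> a <= K * c -> b <= K * d -> Rmin a b <= K * Rmin c d.
Proof.
  intros HK H1 H2. unfold Rmin at 2. destruct Rle_dec.
  - eapply Rle_trans; [apply Rmin_l| exact H1].
  - eapply Rle_trans; [apply Rmin_r| exact H2].
Qed.

Theorem lemma3p5 (Phi1 Phi2 : R -> R) :
  young Phi1 -> doubling Phi1 -> integrable_at_infty_inv Phi1 ->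
  young Phi2 -> doubling Phi2 -> integrable_at_infty_inv Phi2 ->
  exists Phi : R -> R,
    young Phi /\ doubling Phi /\
    (forall t, 0 <= t -> Phi t <= Rmin (Phi1 t) (Phi2 t)) /\
    integrable_at_infty_inv Phi /\
    (exists c T : R, 0 < c /\
       forall t, T <= t -> c * Rmin (Phi1 t) (Phi2 t) <= Phi t).
Proof.
  intros Y1 [C1 [T1 D1]] [a1 [Ha1 [Hp1 [l1 I1]]]] Y2 [C2 [T2 D2]] [a2 [Ha2 [Hp2 [l2 I2]]]].
  set (K := Rmax 1 (Rmax C1 C2)).
  set (T0 := Rmax 0 (Rmax T1 T2)).
  assert (HK1 : 1 <= K) by apply Rmax_l.
  assert (HKC1 : C1 <= K) by (unfold K; eapply Rle_trans; [apply Rmax_l| apply Rmax_r]).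
  assert (HKC2 : C2 <= K) by (unfold K; eapply Rle_trans; [apply Rmax_r| apply Rmax_r]).
  assert (HT0 : 0 <= T0) by apply Rmax_l.
  assert (HT1 : T1 <= T0) by (unfold T0; eapply Rle_trans; [apply Rmax_l| apply Rmax_r]).
  assert (HT2 : T2 <= T0) by (unfold T0; eapply Rle_trans; [apply Rmax_r| apply Rmax_r]).
  destruct Y1 as [Z1 [N1 [M1 Cv1]]] eqn:EY1. destruct Y2 as [Z2 [N2 [M2 Cv2]]] eqn:EY2.
  assert (dbl : forall t, T0 <= t -> Rmin (Phi1 (2*t)) (Phi2 (2*t)) <= K * Rmin (Phi1 t) (Phi2 t)).
  { intros t Ht. pose proof (D1 t ltac:(lra)). pose proof (D2 t ltac:(lra)).
    pose proof (N1 t ltac:(lra)). pose proof (N2 t ltac:(lra)).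
    assert (Phi1 (2*t) <= K * Phi1 t).
    { apply Rle_trans with (C1 * Phi1 t); auto. apply Rmult_le_compat_r; lra. }
    assert (Phi2 (2*t) <= K * Phi2 t).
    { apply Rle_trans with (C2 * Phi2 t); auto. apply Rmult_le_compat_r; lra. }
    apply rmin_mono; auto; lra. }
  assert (low : forall t, 2*T0 <= t -> Rmin (Phi1 t) (Phi2 t) <= K * Phi Phi1 Phi2 t).
  { intros t Ht. pose proof (dbl (t/2) ltac:(lra)).
    replace (2 * (t/2)) with t in H by field.
    pose proof (Phi_lower Phi1 Phi2 Y1 Y2 t ltac:(lra)).
    eapply Rle_trans; [exact H|]. apply Rmult_le_compat_l; lra. }
  assert (Hc : 0 < / K) by (apply Rinv_0_lt_compat; lra).
  exists (Phi Phi1 Phi2). split; [|split; [|split; [|split]]].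
  - apply Phi_young; auto.
  - exists (K*K), (2*T0). intros t Ht.
    pose proof (Phi_upper Phi1 Phi2 Y1 Y2 (2*t) ltac:(lra)).
    pose proof (dbl t ltac:(lra)). pose proof (low t Ht).
    assert (K * Rmin (Phi1 t) (Phi2 t) <= K * (K * Phi Phi1 Phi2 t)) by (apply Rmult_le_compat_l; lra).
    rewrite Rmult_assoc. lra.
  - apply Phi_upper; auto.
  - assert (Pa1 := pos_a Phi1 a1 Y1 Ha1 (Hp1 a1 (Rle_refl _))).
    assert (Pa2 := pos_a Phi2 a2 Y2 Ha2 (Hp2 a2 (Rle_refl _))).
    set (a := Rmax (2*T0) (Rmax (2*a1) (2*a2)) + 1).
    assert (Ha : 2*T0 < a /\ 2*a1 < a /\ 2*a2 < a).
    { unfold a. pose proof (Rmax_l (2*T0) (Rmax (2*a1) (2*a2))).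
      pose proof (Rmax_r (2*T0) (Rmax (2*a1) (2*a2))).
      pose proof (Rmax_l (2*a1) (2*a2)). pose proof (Rmax_r (2*a1) (2*a2)). lra. }
    assert (Hpos : forall t, a <= t -> 0 < Phi Phi1 Phi2 t).
    { intros t Ht. pose proof (Phi_lower Phi1 Phi2 Y1 Y2 t ltac:(lra)).
      assert (0 < Rmin (Phi1 (t/2)) (Phi2 (t/2))) by (apply Rmin_pos; [apply Hp1| apply Hp2]; lra).
      lra. }
    exists a. split; [lra|]. split; auto.
    assert (ex1 : forall u v, a1 <= u -> u <= v -> ex_RInt (fun t => / Phi1 t) u v).
    { intros u v Hu Hv. apply young_inv_ex; auto; try lra. intros; apply Hp1; lra. }
    assert (ex2 : forall u v, a2 <= u -> u <= v -> ex_RInt (fun t => / Phi2 t) u v).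
    { intros u v Hu Hv. apply young_inv_ex; auto; try lra. intros; apply Hp2; lra. }
    assert (nn1 : forall t, a1 <= t -> 0 <= / Phi1 t) by (intros; apply Rlt_le, Rinv_0_lt_compat, Hp1; auto).
    assert (nn2 : forall t, a2 <= t -> 0 <= / Phi2 t) by (intros; apply Rlt_le, Rinv_0_lt_compat, Hp2; auto).
    assert (B1 := bound_gen _ a1 l1 nn1 ex1 I1).
    assert (B2 := bound_gen _ a2 l2 nn2 ex2 I2).
    assert (exP : forall b, a <= b -> ex_RInt (fun t => / Phi Phi1 Phi2 t) a b).
    { intros b Hb. apply young_inv_ex; [apply Phi_young; auto|lra|lra|].
      intros; apply Hpos; lra. }
    apply (gen_of_bounded _ a (K * (l1 + l2))).
    + intros t Ht. apply Rlt_le, Rinv_0_lt_compat, Hpos; auto.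
    + exact exP.
    + intros b Hb.
      assert (e1 := ex1 a b ltac:(lra) Hb). assert (e2 := ex2 a b ltac:(lra) Hb).
      destruct (rint_lin (fun t => / Phi1 t) (fun t => / Phi2 t) a b K e1 e2) as [E e12].
      assert (L : RInt (fun t => / Phi Phi1 Phi2 t) a b <= RInt (fun x => K * (/ Phi1 x + / Phi2 x)) a b).
      { apply RInt_le; [lra|exact (exP b Hb)|exact e12|]. intros x Hx.
        apply inv_bound; [apply Hpos; lra| apply Hp1; lra| apply Hp2; lra| apply low; lra]. }
      pose proof (B1 a b ltac:(lra) Hb). pose proof (B2 a b ltac:(lra) Hb).
      rewrite E in L. eapply Rle_trans; [exact L|]. apply Rmult_le_compat_l; lra.
  - exists (/ K), (2*T0). split; auto. intros t Ht.
    pose proof (low t Ht).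
    apply Rmult_le_reg_l with K; [lra|].
    rewrite <- Rmult_assoc, Rinv_r by lra. lra.
Qed.
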